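(* Let $R$ be a ring such that the set $\operatorname{Nil}(R)$ of nilpotent elements is closed under addition, or is closed under the operation $x\circ y=x+y-xy$. Then $R$ satisfies Köthe's conjecture.
   Context: Rings are associative and not necessarily unital. A ring $R$ satisfies Köthe's conjecture if every nil left ideal of $R$ is contained in a nil two-sided ideal (equivalently, the sum of two nil left ideals of $R$ is a nil left ideal). *)

(* Defs.v *)
(* Rings are associative but NOT necessarily unital, so we
   model a ring as an additive abelian group (zmodType) V together with a
   multiplication mul : V -> V -> V that is associative and bi-distributive. *)
From mathcomp Require Import all_boot all_algebra.
Set Implicit Arguments. Unset Strict Implicit. Unset Printing Implicit Defensive.
Import GRing.Theory.
Local Open Scope ring_scope.

Section Rng.
Variables (V : zmodType) (mul : V -> V -> V).

Definition rng_axioms : Prop :=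
  [/\ (forall x y z, mul x (mul y z) = mul (mul x y) z),
      (forall x y z, mul (x + y) z = mul x z + mul y z) &
      (forall x y z, mul x (y + z) = mul x y + mul x z)].

(* npow x n = x^(n+1) (no unit available) *)
Fixpoint npow (x : V) (n : nat) : V :=
  match n with 0 => x | S k => mul x (npow x k) end.

Definition nilpotent (x : V) : Prop := exists n, npow x n = 0.

Definition nil_set (S : V -> Prop) : Prop := forall x, S x -> nilpotent x.

Definition add_subgroup (S : V -> Prop) : Prop :=
  S 0 /\ (forall x y, S x -> S y -> S (x - y)).

Definition left_ideal (L : V -> Prop) : Prop :=
  add_subgroup L /\ (forall r x, L x -> L (mul r x)).

Definition two_sided_ideal (I : V -> Prop) : Prop :=
  add_subgroup I /\ (forall r x, I x -> I (mul r x)) /\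
  (forall r x, I x -> I (mul x r)).

Definition koethe : Prop :=
  forall L, left_ideal L -> nil_set L ->
    exists I, [/\ two_sided_ideal I, nil_set I & forall x, L x -> I x].

Definition circ (x y : V) : V := x + y - mul x y.

End Rng.

(* Main.v *)
Require Import Defs.
From mathcomp Require Import all_boot all_algebra.
Local Open Scope ring_scope.
Import GRing.Theory.

Section Aux.
Variables (V : zmodType) (mul : V -> V -> V).
Hypothesis A : rng_axioms mul.

Let assoc : forall x y z, mul x (mul y z) = mul (mul x y) z.
Proof. by case: A. Qed.
Let dl : forall x y z, mul (x + y) z = mul x z + mul y z.
Proof. by case: A. Qed.
Let dr : forall x y z, mul x (y + z) = mul x y + mul x z.
Proof. by case: A. Qed.

Lemma mul0l y : mul 0 y = 0.
Proof. by apply: (@addrI _ (mul 0 y)); rewrite -dl !addr0. Qed.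
Lemma mul0r y : mul y 0 = 0.
Proof. by apply: (@addrI _ (mul y 0)); rewrite -dr !addr0. Qed.
Lemma mulNl x y : mul (- x) y = - mul x y.
Proof. by apply/eqP; rewrite -subr_eq0 opprK -dl addNr mul0l. Qed.
Lemma mulNr x y : mul y (- x) = - mul y x.
Proof. by apply/eqP; rewrite -subr_eq0 opprK -dr addNr mul0r. Qed.
Lemma mulBl x y z : mul (x - y) z = mul x z - mul y z.
Proof. by rewrite dl mulNl. Qed.

Lemma npow_prod b r k :
  npow mul (mul b r) k.+1 = mul b (mul (npow mul (mul r b) k) r).
Proof.
elim: k => [|k IH]; first by rewrite /= !assoc.
change (mul (mul b r) (npow mul (mul b r) k.+1) =
  mul b (mul (mul (mul r b) (npow mul (mul r b) k)) r)).
rewrite IH. by rewrite -assoc -(assoc (mul r b)) -(assoc r b).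
Qed.

Variable L : V -> Prop.
Hypothesis HL : left_ideal mul L.
Hypothesis NL : nil_set mul L.

Definition T t := exists b, L b /\ (t = b \/ exists r, t = mul b r).

Lemma T_nil t : T t -> nilpotent mul t.
Proof.
case=> b [Lb [->|[r ->]]]; first exact: NL.
case: (@NL _ (proj2 HL r b Lb)) => n Hn.
by exists n.+1; rewrite npow_prod Hn mul0l mul0r.
Qed.

Fixpoint seqc (x b : V) k := if k is k'.+1 then b + mul x (seqc x b k') else b.

Lemma seqc_L x b k : L b -> L (seqc x b k).
Proof.
move=> Lb; case: HL => [[L0 LB] LM].
have LD u v : L u -> L v -> L (u + v).
  move=> Lu Lv; rewrite -[v]opprK; apply LB => //; rewrite -sub0r; by apply LB.
by elim: k => //= k IH; apply LD => //; by apply LM.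
Qed.

Lemma seqc_eq x b k : seqc x b k - mul x (seqc x b k) = b - mul (npow mul x k) b.
Proof.
elim: k => [|k IH] //=.
rewrite dr -assoc.
have -> : b + mul x (seqc x b k) - (mul x b + mul x (mul x (seqc x b k)))
   = b - mul x b + mul x (seqc x b k - mul x (seqc x b k)).
  by rewrite dr mulNr; rewrite opprD !addrA; congr (_ + _); rewrite addrAC.
rewrite IH dr mulNr assoc.
by rewrite addrA addrNK.
Qed.

Lemma key x t :
  ((forall x y, nilpotent mul x -> nilpotent mul y -> nilpotent mul (x + y)) \/
   (forall x y, nilpotent mul x -> nilpotent mul y -> nilpotent mul (circ mul x y))) ->
  nilpotent mul x -> T t -> nilpotent mul (x + t).
Proof.
move=> [H|H] Nx Tt; first by apply: H => //; apply: T_nil.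
case: (Nx) => n Hn.
case: Tt => b [Lb [->|[r ->]]].
- have -> : x + b = circ mul x (seqc x b n).
    by rewrite /circ -addrA seqc_eq Hn mul0l subr0.
  by apply: H => //; apply: T_nil; exists (seqc x b n); split=> //; [apply: seqc_L|left].
- have -> : x + mul b r = circ mul x (mul (seqc x b n) r).
    by rewrite /circ -addrA assoc -mulBl seqc_eq Hn mul0l subr0.
  apply: H => //; apply: T_nil; exists (seqc x b n); split; first exact: seqc_L.
  by right; exists r.
Qed.

Inductive Isum : V -> Prop :=
| I0 : Isum 0
| IS s t : T t -> Isum s -> Isum (t + s).

Lemma Isum_add u v : Isum u -> Isum v -> Isum (u + v).
Proof. by elim=> [|s t Tt _ IH] Iv; [rewrite add0r | rewrite -addrA; apply: IS => //; exact: IH]. Qed.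

Lemma T_opp t : T t -> T (- t).
Proof.
case: HL => [[L0 LB] _].
have LN u : L u -> L (- u) by move=> Lu; rewrite -sub0r; apply: LB.
case=> b [Lb [->|[r ->]]]; exists (- b); split; auto.
by right; exists r; rewrite mulNl.
Qed.

Lemma Isum_opp u : Isum u -> Isum (- u).
Proof.
elim=> [|s t Tt _ IH]; first by rewrite oppr0; apply: I0.
by rewrite opprD; apply: IS => //; apply: T_opp.
Qed.

Lemma Isum_ideal : two_sided_ideal mul Isum.
Proof.
case: HL => [[L0 LB] LM].
split; [split; [exact: I0|] | split].
- by move=> x y Ix Iy; apply: Isum_add => //; apply: Isum_opp.
- move=> r x; elim=> [|s t Tt _ IH]; first by rewrite mul0r; apply: I0.
  rewrite dr; apply: IS => //.
  case: Tt => b [Lb [->|[r' ->]]]; exists (mul r b); split; auto.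
  by right; exists r'; rewrite assoc.
- move=> r x; elim=> [|s t Tt _ IH]; first by rewrite mul0l; apply: I0.
  rewrite dl; apply: IS => //.
  case: Tt => b [Lb [->|[r' ->]]]; exists b; split=> //; right.
    by exists r.
  by exists (mul r' r); rewrite assoc.
Qed.

End Aux.

Theorem lemma2p3 (V : zmodType) (mul : V -> V -> V) :
  rng_axioms mul ->
  ((forall x y, nilpotent mul x -> nilpotent mul y -> nilpotent mul (x + y)) \/
   (forall x y, nilpotent mul x -> nilpotent mul y -> nilpotent mul (circ mul x y))) ->
  koethe mul.
Proof.
move=> A H L HL NL.
exists (@Isum V mul L); split.
- exact: (@Isum_ideal V mul A L HL).
- move=> x; elim=> [|s t Tt _ IH]; first by exists 0%N.
  by rewrite addrC; apply: (@key V mul A L HL NL _ _ H).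
- move=> x Lx; rewrite -[x]addr0; apply: IS; last exact: I0.
  by exists x; split=> //; left.
Qed.
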